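(* In a partial synchronized communication system, at any time, the length of a path along a ring between any two robots lying in the same ring is an element of $2\pi\mathbb{N}$ (a nonnegative integer multiple of $2\pi$).
   Context: Model. A system consists of pairwise disjoint unit circles $C_1,\dots,C_n$ in the plane (trajectories) and a communication range $r>0$. Its communication graph $G$ has vertex set $\{C_1,\dots,C_n\}$, $C_i,C_j$ adjacent iff the distance between their centres is at most $2+r$. Positions on a circle are angles (mod $2\pi$). For an edge $(i,j)$, the link position $\phi_{ij}$ is the angle of the point of $C_i$ closest to $C_j$. A schedule $F=(f,g)$ assigns each circle a starting angle $f(C_i)$ and direction $g(C_i)\in\{1,-1\}$; a robot following it on $C_i$ is at $f(C_i)+g(C_i)2\pi t$ at time $t$. $F$ is a synchronization schedule if $g(C_i)=-g(C_j)$ for adjacent circles and robots following $F$ on adjacent $C_i,C_j$ are at $\phi_{ij},\phi_{ji}$ at exactly the same times. A synchronized communication system (SCS) consists of $n$ robots, initially one per circle, following a synchronization schedule, with the switching rule: when a robot on $C_i$ reaches $\phi_{ij}$ and $C_j$ is empty, it instantly passes to $C_j$ and from then on follows the schedule of $C_j$; if $C_j$ has a robot, they meet and each stays on its circle. A partial SCS arises by letting some robots leave (possibly at different times); remaining robots never leave. Rings. Trace a point moving along a circle $C_i$ in direction $g(C_i)$; whenever it reaches a link position $\phi_{ij}$ of its current circle, it passes to $C_j$ at $\phi_{ji}$ and continues in direction $g(C_j)$. The closed, directed curve traced is a ring; the circles decompose into rings overlapping only at link positions. A path along a ring from one point to another follows the ring in its direction of motion; its length is the total length of the circle arcs it consists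 of (passing between circles at link positions costs no length). A robot is in a ring if it lies on a point of that ring. *)

(* Defs.v *)
From Stdlib Require Import Reals ZArith.
From mathcomp Require Import ssreflect ssrfun ssrbool eqtype ssrnat fintype.

Set Implicit Arguments.
Unset Strict Implicit.

Local Open Scope R_scope.

(* A system: n unit circles C_i with centres (cx i, cy i), communication
   range rng, and a schedule F = (start, dir): a robot following F on C_i is
   at angle  start i + dir i * 2 pi t  at time t. *)
Record scs_data (n : nat) := SCSData {
  cx : 'I_n -> R;
  cy : 'I_n -> R;
  rng : R;
  start : 'I_n -> R;
  dir : 'I_n -> R
}.

Definition angeq (a b : R) : Prop := exists z : Z, a = b + 2 * PI * IZR z.

Definition cdist n (S : scs_data n) (i j : 'I_n) : R :=
  sqrt ((cx S i - cx S j) ^ 2 + (cy S i - cy S j) ^ 2).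

Definition valid_system n (S : scs_data n) : Prop :=
  0 < rng S /\ forall i j : 'I_n, i <> j -> 2 < cdist S i j.

Definition adj n (S : scs_data n) (i j : 'I_n) : Prop :=
  i <> j /\ cdist S i j <= 2 + rng S.

(* the angle th on C_i is the link position phi_ij, i.e. the point of C_i
   at angle th is the point of C_i closest to C_j *)
Definition at_link n (S : scs_data n) (i j : 'I_n) (th : R) : Prop :=
  cos th * cdist S i j = cx S j - cx S i /\
  sin th * cdist S i j = cy S j - cy S i.

Definition spos n (S : scs_data n) (i : 'I_n) (t : R) : R :=
  start S i + dir S i * (2 * PI * t).

Definition sync_schedule n (S : scs_data n) : Prop :=
  (forall i, dir S i = 1 \/ dir S i = -1) /\
  forall i j, adj S i j ->
    dir S i = - dir S j /\
    forall t, 0 <= t -> (at_link S i j (spos S i t) <-> at_link S j i (spos S j t)).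

(* A run of a partial SCS.  Robots are indexed by their initial circles;
   loc k t = Some i : robot k is on C_i at time t (hence at angle spos S i t),
   loc k t = None   : robot k has left the system. *)
Definition can_switch n (S : scs_data n) (loc : 'I_n -> R -> option 'I_n)
    (i j : 'I_n) (t : R) : Prop :=
  adj S i j /\ at_link S i j (spos S i t) /\
  (* C_j is empty (just before time t) *)
  exists eps, 0 < eps <= t /\
    forall k' s, t - eps < s < t -> loc k' s <> Some j.

Definition partial_scs_run n (S : scs_data n) (loc : 'I_n -> R -> option 'I_n)
  : Prop :=
  (* initially one robot per circle (robots may leave already at time 0) *)
  (forall k, loc k 0 = Some k \/ loc k 0 = None) /\
  (forall k t t', 0 <= t <= t' -> loc k t = None -> loc k t' = None) /\
  (forall k t, 0 <= t -> exists eps, 0 < eps /\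
     forall s, t <= s < t + eps -> loc k s = loc k t) /\
  (forall k t, 0 < t -> exists eps o, 0 < eps <= t /\
     forall s, t - eps < s < t -> loc k s = o) /\
  (* switching rule: a robot arriving on C_i at phi_ij with C_j empty
     passes to C_j; otherwise it stays on its circle (or leaves) *)
  (forall k t i eps, 0 < t -> 0 < eps <= t ->
     (forall s, t - eps < s < t -> loc k s = Some i) ->
     loc k t = None \/
     (loc k t = Some i /\ ~ (exists j, can_switch S loc i j t)) \/
     (exists j, loc k t = Some j /\ can_switch S loc i j t)).

Definition islink n (S : scs_data n) (i : 'I_n) (th : R) : Prop :=
  exists j, adj S i j /\ at_link S i j th.

Definition no_link_inside n (S : scs_data n) (i : 'I_n) (th l : R) : Prop :=
  forall s, 0 < s < l -> ~ islink S i (th + dir S i * s).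

(* ring_move S i th j th' L : a path along a ring from the point of C_i at
   angle th to the point of C_j at angle th', of length L, whose first step
   is motion along C_i (or which is empty). Reaching a link position phi_ij
   the traced point passes (at no cost) to C_j at phi_ji. *)
Inductive ring_move n (S : scs_data n) : 'I_n -> R -> 'I_n -> R -> R -> Prop :=
| rm_nil : forall i th th', angeq th th' -> ring_move S i th i th' 0
| rm_arc : forall i th l th', 0 < l -> no_link_inside S i th l ->
    angeq (th + dir S i * l) th' -> ring_move S i th i th' l
| rm_jump : forall i th l j thj q thq L, 0 < l -> no_link_inside S i th l ->
    adj S i j -> at_link S i j (th + dir S i * l) -> at_link S j i thj ->
    ring_move S j thj q thq L -> ring_move S i th q thq (l + L).

(* a path along a ring: a point lying at a link position phi_ij of C_i lies
   on two rings; along one of them it first passes to C_j at phi_ji. *)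
Definition ring_path n (S : scs_data n) (i : 'I_n) (th : R) (q : 'I_n) (thq L : R)
  : Prop :=
  ring_move S i th q thq L \/
  exists j thj, adj S i j /\ at_link S i j th /\ at_link S j i thj /\
                ring_move S j thj q thq L.

(* Main.v *)
Require Import Defs.
From Stdlib Require Import Reals.
From mathcomp Require Import ssreflect ssrfun ssrbool eqtype ssrnat fintype.
From Stdlib Require Import Lra Lia Psatz ZArith.

Set Implicit Arguments.
Local Open Scope R_scope.

Lemma trig_Z (z : Z) : cos (2 * PI * IZR z) = 1 /\ sin (2 * PI * IZR z) = 0.
Proof.
  have hs : sin (PI * IZR z) = 0 by apply: sin_eq_0_1; exists z; ring.
  split.
  - replace (2 * PI * IZR z) with (2 * (PI * IZR z)) by ring.
    rewrite cos_2a_sin hs; ring.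
  - replace (2 * PI * IZR z) with (2 * (PI * IZR z)) by ring.
    rewrite sin_2a hs; ring.
Qed.

Lemma cos_Z x z : cos (x + 2 * PI * IZR z) = cos x.
Proof. rewrite cos_plus. have [h1 h2] := trig_Z z. rewrite h1 h2; ring. Qed.
Lemma sin_Z x z : sin (x + 2 * PI * IZR z) = sin x.
Proof. rewrite sin_plus. have [h1 h2] := trig_Z z. rewrite h1 h2; ring. Qed.

Lemma angeq_sym a b : angeq a b -> angeq b a.
Proof. move=> [z ->]. exists (- z)%Z. rewrite opp_IZR. ring. Qed.
Lemma angeq_trans a b c : angeq a b -> angeq b c -> angeq a c.
Proof. move=> [z ->] [w ->]. exists (w + z)%Z. rewrite plus_IZR. ring. Qed.

Arguments angeq_sym {a b}.
Arguments angeq_trans {a b c}.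
Lemma cos_sin_angeq a b : cos a = cos b -> sin a = sin b -> angeq a b.
Proof.
  move=> hc hs.
  set x := a - b.
  have cx : cos x = 1.
  { rewrite /x cos_minus hc hs. have := sin2_cos2 b. rewrite /Rsqr. lra. }
  have sx : sin (x / 2) = 0.
  { have := cos_2a_sin (x / 2). replace (2 * (x / 2)) with x by field.
    rewrite cx. nra. }
  have [k hk] := sin_eq_0_0 _ sx.
  exists k. have : a - b = 2 * (x / 2) by rewrite /x; field.
  rewrite hk. lra.
Qed.

Lemma link_unique n (S : scs_data n) i j a b :
  valid_system S -> i <> j -> at_link S i j a -> at_link S i j b -> angeq a b.
Proof.
  move=> [_ hv] hij [ha1 ha2] [hb1 hb2].
  have hd := hv i j hij.
  apply: cos_sin_angeq.
  - apply: (Rmult_eq_reg_r (cdist S i j)); lra.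
  - apply: (Rmult_eq_reg_r (cdist S i j)); lra.
Qed.

Lemma link_shift n (S : scs_data n) i j a b :
  at_link S i j a -> angeq a b -> at_link S i j b.
Proof. move=> [h1 h2] [z hz]. subst a. rewrite /at_link cos_Z sin_Z in h1 h2. by split. Qed.

Lemma spos_shift n (S : scs_data n) i tau l :
  spos S i tau + dir S i * l = spos S i (tau + l / (2 * PI)).
Proof. rewrite /spos. have := PI_RGT_0. move=> h. field. lra. Qed.

Lemma main n (S : scs_data n) :
  valid_system S -> sync_schedule S ->
  forall i th q thq L, ring_move S i th q thq L ->
  forall tau, 0 <= tau -> angeq th (spos S i tau) ->
  angeq thq (spos S q (tau + L / (2 * PI))) /\ 0 <= L.
Proof.
  move=> hv [hdir hsync]. have hpi := PI_RGT_0.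
  induction 1 as [i th th' H|i th l th' hl _ H|i th l j thj q thq L hl _ hadj hlk hlj _ IH];
    move=> tau htau ht.
  - split; last lra.
    replace (tau + 0 / (2 * PI)) with tau by (field; lra).
    exact: (angeq_trans (angeq_sym H) ht).
  - split; last lra.
    apply: angeq_trans (angeq_sym H) _.
    rewrite -spos_shift. move: ht => [z ->]. exists z. ring.
  - have hpt : angeq (th + dir S i * l) (spos S i (tau + l / (2 * PI))).
    { rewrite -spos_shift. move: ht => [z ->]. exists z. ring. }
    have htau' : 0 <= tau + l / (2 * PI).
    { apply: Rplus_le_le_0_compat => //. apply: Rlt_le. apply: Rdiv_lt_0_compat; lra. }
    have [_ hs] := hsync i j hadj.
    have h1 := link_shift hlk hpt.
    have h2 := proj1 (hs _ htau') h1.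
    have h3 := link_unique hv (fun e => proj1 hadj (esym e)) hlj h2.
    have [IH1 IH2] := IH _ htau' h3.
    split; last lra.
    replace (tau + (l + L) / (2 * PI)) with (tau + l / (2 * PI) + L / (2 * PI)) by (field; lra).
    exact IH1.
Qed.

Theorem lemma8 (n : nat) (S : scs_data n) (loc : 'I_n -> R -> option 'I_n) :
  valid_system S -> sync_schedule S -> partial_scs_run S loc ->
  forall (t : R) (k1 k2 a b : 'I_n) (L : R),
    (0 <= t)%R -> k1 <> k2 ->
    loc k1 t = Some a -> loc k2 t = Some b ->
    ring_path S a (spos S a t) b (spos S b t) L ->
    exists m : nat, L = (2 * PI * INR m)%R.
Proof.
  move=> hv hsy _ t k1 k2 a b L ht _ _ _ hp.
  have hpi := PI_RGT_0.
  have [[z hz] hL] : angeq (spos S b t) (spos S b (t + L / (2 * PI))) /\ 0 <= L.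
  { case: hp => [hm | [j [thj [hadj [hl1 [hl2 hm]]]]]].
    - have h0 : angeq (spos S a t) (spos S a t) by exists 0%Z; simpl; ring.
      have [h1 h2] := main hv hsy hm ht h0.
      by split.
    - have [_ hs] := proj2 hsy a j hadj.
      have h2 := proj1 (hs _ ht) hl1.
      have h3 := link_unique hv (fun e => proj1 hadj (esym e)) hl2 h2.
      have [h1 h4] := main hv hsy hm ht h3.
      by split. }
  rewrite -spos_shift in hz.
  have hw : exists w : Z, L = 2 * PI * IZR w.
  { case: (proj1 hsy b) => hd; rewrite hd in hz.
    - exists (- z)%Z. rewrite opp_IZR. lra.
    - exists z. lra. }
  case: hw => w hw.
  have hw0 : (0 <= w)%Z.
  { apply: le_IZR. have : 0 <= 2 * PI * IZR w by lra. move=> h. nra. }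
  exists (Z.to_nat w). rewrite INR_IZR_INZ Z2Nat.id //.
Qed.
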